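(* Let $L=\langle S,A,\to\rangle$ be a labelled transition system, $x,y\in\{o,b\}$, and $s,t\in S$ with $s\equiv^{ed}_{E(x,y)}t$. If there is an infinite sequence $s=s_0\xrightarrow{\tau}s_1\xrightarrow{\tau}s_2\xrightarrow{\tau}\cdots$, then there exist a state $t'$ with $t\twoheadrightarrow^+t'$ and an index $k$ such that $s_k\equiv^{ed}_{E(x,y)}t'$.
   Context: An LTS is $\langle S,A,\to\rangle$ with states $S$, actions $A$ containing the internal action $\tau$, and $\to\subseteq S\times A\times S$; write $s\xrightarrow{a}t$ and $\twoheadrightarrow^+$ for the transitive closure of $\xrightarrow{\tau}$. Game with explicit divergence. Let $\frown,\smile$ be formal tags and $E\subseteq\{\frown,\smile\}$. Spoiler-owned configurations $\langle (s,t),c,m,r\rangle_S$ and Duplicator-owned $\langle (s,t),c,m,r\rangle_D$ have $(s,t)\in S\times S$, $c\in (A\times S)\cup\{\dagger\}$, $m\in (S\times\{\frown,\smile\})\cup\{\dagger\}$, $r\in\{*,\checkmark\}$. From $\langle (s,t),c,m,r\rangle_S$ Spoiler may: (S1) move to $\langle (s,t),c,m,*\rangle_D$ if $c\neq\dagger$; (S2a) for some $s\xrightarrow{a}s'$, move to $\langle (s,t),(a,s'),(t,\frown),*\rangle_D$ if $c=\dagger$; (S2b) for some $s\xrightarrow{a}s'$, move to $\langle (s,t),(a,s'),(t,\frown),\checkmark\rangle_D$ if $c\neq (a,s')$; (S3) for some $t\xrightarrow{a}t'$, move to $\langle (t,s),(a,t'),(s,\frown),\checkmark\rangle_D$. From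 $\langle (u,v),(a,u'),(\bar v,f),r\rangle_D$ Duplicator may: (D1) move to $\langle (u',\bar v),\dagger,\dagger,*\rangle_S$ if $a=\tau$; (D2) if $f=\frown$ and $\bar v\xrightarrow{a}v'$: (a) move to $\langle (u',v'),(a,u'),(v',\smile),*\rangle_S$, or (b) move to $\langle (u',v'),\dagger,\dagger,\checkmark\rangle_S$, or (c) only if $\smile\in E$, move to $\langle (u,v),(a,u'),(v',\smile),*\rangle_S$; (D3) for some $\bar v\xrightarrow{\tau}v'$: (a) move to $\langle (u,v'),(a,u'),(v',f),*\rangle_S$, or (b) only if $f=\smile$, move to $\langle (u',v'),\dagger,\dagger,\checkmark\rangle_S$, or (c) only if $f\in E$, move to $\langle (u,v),(a,u'),(v',f),*\rangle_S$. Duplicator wins a finite play if Spoiler gets stuck, and an infinite play if it has infinitely many $\checkmark$ rewards; other plays are won by Spoiler. $s\equiv^{ed}_E t$ iff Duplicator has a strategy winning all plays from $\langle (s,t),\dagger,\dagger,*\rangle_S$. $E(x,y)$ is the smallest set with $\frown\in E(o,y)$ and $\smile\in E(x,o)$ for all $x,y\in\{o,b\}$. *)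

(* Defs.v *)
From Stdlib Require Import List Relations.
Import ListNotations.

(* Formal tags: Frown = ⌢, Smile = ⌣ *)
Inductive tag := Frown | Smile.
(* rewards: Star = *, Check = ✓ *)
Inductive reward := Star | Check.
Inductive owner := SpoilerPos | DuplicatorPos.
Inductive ob := o | b.

Inductive Exy : ob -> ob -> tag -> Prop :=
| Exy_frown : forall y, Exy o y Frown
| Exy_smile : forall x, Exy x o Smile.

Section Game.
Variables (S A : Type) (tau : A) (step : S -> A -> S -> Prop).

(* configuration <(s,t), c, m, r>_owner ; None encodes † *)
Record conf := Conf {
  cown : owner;
  cpos : S * S;
  cc : option (A * S);
  cm : option (S * tag);
  cr : reward }.

Definition tau_plus : S -> S -> Prop := clos_trans S (fun u v => step u tau v).

Inductive move (E : tag -> Prop) : conf -> conf -> Prop :=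
| S1 : forall s t c m r, c <> None ->
    move E (Conf SpoilerPos (s,t) c m r) (Conf DuplicatorPos (s,t) c m Star)
| S2a : forall s t m r a s', step s a s' ->
    move E (Conf SpoilerPos (s,t) None m r)
           (Conf DuplicatorPos (s,t) (Some (a,s')) (Some (t,Frown)) Star)
| S2b : forall s t c m r a s', step s a s' -> c <> Some (a,s') ->
    move E (Conf SpoilerPos (s,t) c m r)
           (Conf DuplicatorPos (s,t) (Some (a,s')) (Some (t,Frown)) Check)
| S3 : forall s t c m r a t', step t a t' ->
    move E (Conf SpoilerPos (s,t) c m r)
           (Conf DuplicatorPos (t,s) (Some (a,t')) (Some (s,Frown)) Check)
| D1 : forall u v a u' vb f r, a = tau ->
    move E (Conf DuplicatorPos (u,v) (Some (a,u')) (Some (vb,f)) r)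
           (Conf SpoilerPos (u',vb) None None Star)
| D2a : forall u v a u' vb r v', step vb a v' ->
    move E (Conf DuplicatorPos (u,v) (Some (a,u')) (Some (vb,Frown)) r)
           (Conf SpoilerPos (u',v') (Some (a,u')) (Some (v',Smile)) Star)
| D2b : forall u v a u' vb r v', step vb a v' ->
    move E (Conf DuplicatorPos (u,v) (Some (a,u')) (Some (vb,Frown)) r)
           (Conf SpoilerPos (u',v') None None Check)
| D2c : forall u v a u' vb r v', step vb a v' -> E Smile ->
    move E (Conf DuplicatorPos (u,v) (Some (a,u')) (Some (vb,Frown)) r)
           (Conf SpoilerPos (u,v) (Some (a,u')) (Some (v',Smile)) Star)
| D3a : forall u v a u' vb f r v', step vb tau v' ->
    move E (Conf DuplicatorPos (u,v) (Some (a,u')) (Some (vb,f)) r)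
           (Conf SpoilerPos (u,v') (Some (a,u')) (Some (v',f)) Star)
| D3b : forall u v a u' vb r v', step vb tau v' ->
    move E (Conf DuplicatorPos (u,v) (Some (a,u')) (Some (vb,Smile)) r)
           (Conf SpoilerPos (u',v') None None Check)
| D3c : forall u v a u' vb f r v', step vb tau v' -> E f ->
    move E (Conf DuplicatorPos (u,v) (Some (a,u')) (Some (vb,f)) r)
           (Conf SpoilerPos (u,v) (Some (a,u')) (Some (v',f)) Star).

(* A Duplicator strategy: given the history so far (most recent configuration
   first), choose the next configuration. *)
Definition dstrategy := list conf -> conf.

Fixpoint hist (p : nat -> conf) (n : nat) : list conf :=
  match n with
  | 0 => [p 0]
  | Datatypes.S k => p (Datatypes.S k) :: hist p k
  end.

Definition consistent_upto (E : tag -> Prop) (sigma : dstrategy) (c0 : conf)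
    (p : nat -> conf) (n : nat) : Prop :=
  p 0 = c0 /\
  forall i, i < n ->
    move E (p i) (p (Datatypes.S i)) /\
    (cown (p i) = DuplicatorPos -> p (Datatypes.S i) = sigma (hist p i)).

(* sigma wins all plays from c0:
   - Duplicator is never stuck (sigma always proposes a legal move), so every
     finite maximal play ends with Spoiler stuck (Duplicator wins);
   - every infinite play contains infinitely many ✓ rewards. *)
Definition dwinning (E : tag -> Prop) (sigma : dstrategy) (c0 : conf) : Prop :=
  (forall p n, consistent_upto E sigma c0 p n ->
     cown (p n) = DuplicatorPos -> move E (p n) (sigma (hist p n))) /\
  (forall p, (forall n, consistent_upto E sigma c0 p n) ->
     forall N, exists n, N <= n /\ cr (p n) = Check).

Definition ed_equiv (E : tag -> Prop) (s t : S) : Prop :=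
  exists sigma : dstrategy, dwinning E sigma (Conf SpoilerPos (s,t) None None Star).

End Game.

Arguments ed_equiv {S A} tau step E s t.
Arguments tau_plus {S A} tau step _ _.

(* Main.v *)
Require Import Defs.
From Stdlib Require Import List Relations Lia Arith ClassicalEpsilon.
Import ListNotations.

Section T.
Variables (S A : Type) (tau : A) (step : S -> A -> S -> Prop) (E : tag -> Prop).

Lemma hist_ext (f g : nat -> conf S A) n :
  (forall i, i <= n -> f i = g i) -> hist S A f n = hist S A g n.
Proof.
  induction n; intros H; simpl.
  - rewrite H; auto.
  - rewrite H by lia. rewrite IHn; auto.
Qed.

Lemma move_spoiler_r pos cc cm r r' c' :
  move S A tau step E (Conf S A SpoilerPos pos cc cm r) c' ->
  move S A tau step E (Conf S A SpoilerPos pos cc cm r') c'.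
Proof.
  intros H; inversion H; subst; econstructor; eauto.
Qed.

Lemma consistent_mono sigma c0 p n m :
  consistent_upto S A tau step E sigma c0 p n -> m <= n ->
  consistent_upto S A tau step E sigma c0 p m.
Proof.
  intros [H0 H] Hm; split; auto. intros i Hi; apply H; lia.
Qed.

Fixpoint gfix (hq : list (conf S A)) (l : list (conf S A)) : list (conf S A) :=
  match l with
  | [] => []
  | x :: l' => match l' with [] => hq | _ => x :: gfix hq l' end
  end.

Lemma transfer sigma c0 q m u w r :
  dwinning S A tau step E sigma c0 ->
  consistent_upto S A tau step E sigma c0 q m ->
  q m = Conf S A SpoilerPos (u,w) None None r ->
  ed_equiv tau step E u w.
Proof.
  intros [W1 W2] Hq Hqm.
  set (cs := Conf S A SpoilerPos (u,w) None None Star).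
  exists (fun h => sigma (gfix (hist S A q m) h)).
  set (P := fun (p : nat -> conf S A) j => if j <=? m then q j else p (j - m)).
  assert (HPlo : forall p j, j <= m -> P p j = q j).
  { intros p j Hj; unfold P; destruct (Nat.leb_spec j m); auto; lia. }
  assert (HPhi : forall p j, 1 <= j -> P p (m + j) = p j).
  { intros p j Hj; unfold P; destruct (Nat.leb_spec (m+j) m); [lia|].
    f_equal; lia. }
  assert (Hhist : forall p j, hist S A (P p) (m + j) = gfix (hist S A q m) (hist S A p j)).
  { intros p j; induction j.
    - rewrite Nat.add_0_r; simpl. apply hist_ext; intros; apply HPlo; auto.
    - replace (m + Datatypes.S j) with (Datatypes.S (m + j)) by lia.
      cbn [hist]. rewrite IHj. rewrite <- (HPhi p (Datatypes.S j)) by lia.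
      replace (m + Datatypes.S j) with (Datatypes.S (m + j)) by lia.
      destruct j; reflexivity. }
  assert (Hcons : forall p n, consistent_upto S A tau step E
                    (fun h => sigma (gfix (hist S A q m) h)) cs p n ->
                  consistent_upto S A tau step E sigma c0 (P p) (m + n)).
  { intros p n [Hp0 Hp]. destruct Hq as [Hq0 Hq]. split.
    - rewrite HPlo by lia; auto.
    - intros i Hi.
      destruct (Nat.lt_ge_cases i m) as [Him|Him].
      + rewrite !HPlo by lia. rewrite (hist_ext (P p) q) by (intros; apply HPlo; lia). apply Hq; auto.
      + destruct (Nat.eq_dec i m) as [->|Hne].
        * rewrite HPlo by lia. replace (Datatypes.S m) with (m + 1) by lia. rewrite (HPhi p 1) by lia.
          split.
          -- rewrite Hqm. destruct (Hp 0) as [Hm _]; [lia|].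
             rewrite Hp0 in Hm. unfold cs in Hm. eapply move_spoiler_r; eauto.
          -- rewrite Hqm; simpl; discriminate.
        * replace i with (m + (i - m)) by lia.
          replace (Datatypes.S (m + (i - m))) with (m + Datatypes.S (i - m)) by lia.
          rewrite (HPhi p (i - m)) by lia. rewrite (HPhi p (Datatypes.S (i - m))) by lia.
          rewrite Hhist. apply Hp. lia. }
  split.
  - intros p n Hc Ho.
    destruct n as [|n].
    + destruct Hc as [Hp0 _]. rewrite Hp0 in Ho; discriminate.
    + pose proof (Hcons p _ Hc) as HC.
      pose proof (W1 _ _ HC) as HW.
      rewrite HPhi in HW by lia. rewrite Hhist in HW. auto.
  - intros p Hp N.
    assert (HA : forall n, consistent_upto S A tau step E sigma c0 (P p) n).
    { intros n. apply consistent_mono with (m + n); [apply Hcons; auto| lia]. }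
    destruct (W2 _ HA (m + N + 1)) as [n' [Hn' Hck]].
    exists (n' - m). split; [lia|].
    replace n' with (m + (n' - m)) in Hck by lia.
    rewrite HPhi in Hck by lia. auto.
Qed.
End T.

Theorem lemma6p9 (S A : Type) (tau : A) (step : S -> A -> S -> Prop)
    (x y : ob) (s t : S) (ss : nat -> S) :
  ed_equiv tau step (Exy x y) s t ->
  ss 0 = s ->
  (forall n, step (ss n) tau (ss (Datatypes.S n))) ->
  exists t' k, tau_plus tau step t t' /\ ed_equiv tau step (Exy x y) (ss k) t'.
Proof.
  intros [sigma [W1 W2]] Hs0 Hss.
  set (E := Exy x y).
  set (R := fun u v => step u tau v).
  set (c0 := Conf S A SpoilerPos (s,t) None None Star).
  set (nxt := fun u => epsilon (inhabits s) (fun u' => exists k, ss k = u /\ u' = ss (Datatypes.S k))).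
  assert (Hnxt : forall k, exists k', ss k' = ss k /\ nxt (ss k) = ss (Datatypes.S k')).
  { intros k. apply (epsilon_spec (inhabits s) (fun u' => exists k0, ss k0 = ss k /\ u' = ss (Datatypes.S k0))).
    eauto. }
  set (spoil := fun c : conf S A => match c with
     | Conf _ _ _ (u,w) None _ _ => Conf S A DuplicatorPos (u,w) (Some (tau, nxt u)) (Some (w,Frown)) Star
     | Conf _ _ _ pos cc cm _ => Conf S A DuplicatorPos pos cc cm Star end).
  set (f := fun h : list (conf S A) => match h with
     | c :: _ => match cown S A c with DuplicatorPos => sigma h | SpoilerPos => spoil c end
     | [] => c0 end).
  set (H := fix H n := match n with 0 => [c0] | Datatypes.S n => f (H n) :: H n end).
  set (p := fun n => hd c0 (H n)).
  assert (HH : forall n, H n = hist S A p n).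
  { induction n; simpl; auto. rewrite <- IHn. reflexivity. }
  assert (Hp0 : p 0 = c0) by reflexivity.
  assert (HpS : forall n, p (Datatypes.S n) = match cown S A (p n) with
       DuplicatorPos => sigma (hist S A p n) | SpoilerPos => spoil (p n) end).
  { intros n. unfold p at 1. simpl. rewrite HH. destruct n; reflexivity. }
  set (Inv := fun c : conf S A =>
     (exists k, fst (cpos S A c) = ss k) /\ clos_refl_trans S R t (snd (cpos S A c)) /\
     (forall a u', cc S A c = Some (a,u') -> a = tau /\ exists k, u' = ss k) /\
     (forall vb g, cm S A c = Some (vb,g) -> clos_refl_trans S R t vb)).
  set (good := fun c : conf S A => cown S A c = SpoilerPos /\ cc S A c = None /\ cm S A c = None /\
     clos_trans S R t (snd (cpos S A c))).
  assert (Dstep : forall c c', Inv c -> cown S A c = DuplicatorPos -> move S A tau step E c c' ->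
            Inv c' /\ (cr S A c' = Check -> good c')).
  { intros c c' [[k Hk] [Hw [Hc Hm]]] Ho Hmv.
    inversion Hmv; subst; simpl in *; try discriminate;
    destruct (Hc _ _ eq_refl) as [Ha [k' Hk']]; subst;
    specialize (Hm _ _ eq_refl).
    all: unfold Inv, good; simpl; split; [split; [eauto | split; [ | split]] | ]; intros;
      try discriminate;
      repeat match goal with H : Some _ = Some _ |- _ => inversion H; clear H; subst end; eauto.
    all: try match goal with H: clos_refl_trans _ _ ?t0 ?v, H': ?st ?v ?tu ?v' |- clos_refl_trans _ _ ?t0 ?v' =>
       apply rt_trans with v; [exact H| apply rt_step; exact H'] end.
    all: try (repeat split; auto; match goal with H: clos_refl_trans _ _ ?t0 ?v, H': ?st ?v ?tu ?v' |- clos_trans _ _ ?t0 ?v' =>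
       apply clos_rt_t with v; [exact H| apply t_step; exact H'] end).
  }
  assert (Sstep : forall c, Inv c -> cown S A c = SpoilerPos ->
     move S A tau step E c (spoil c) /\ Inv (spoil c) /\ cr S A (spoil c) = Star).
  { intros [o [u w] cc cm r] [[k Hk] [Hw [Hc Hm]]] Ho; simpl in *; subst o u.
    destruct cc as [[a u']|].
    - simpl. split; [apply S1; discriminate | split; [|reflexivity]].
      unfold Inv; simpl; split; [eauto|split; [auto|split]]; intros; [inversion H0; subst; eapply Hc; eauto | eauto].
    - destruct (Hnxt k) as [k' [Hk' Hn]]. simpl. rewrite Hn.
      split; [apply S2a; rewrite <- Hk'; apply Hss|].
      split; auto. unfold Inv; simpl; split; [eauto|split; [auto|split]]; intros;
        repeat match goal with H : Some _ = Some _ |- _ => inversion H; clear H; subst end; eauto. }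
  assert (Main : forall n, consistent_upto S A tau step E sigma c0 p n /\ Inv (p n) /\
                    (cr S A (p n) = Check -> good (p n))).
  { induction n as [|n [IHc [IHi IHg]]].
    - split; [split; [auto| intros; lia]|]. rewrite Hp0. split.
      + unfold Inv; simpl; split; [exists 0; auto|split; [apply rt_refl|split]]; intros; discriminate.
      + simpl; discriminate.
    - assert (Hmv : move S A tau step E (p n) (p (Datatypes.S n)) /\
               (cown S A (p n) = DuplicatorPos -> p (Datatypes.S n) = sigma (hist S A p n))
               /\ Inv (p (Datatypes.S n)) /\ (cr S A (p (Datatypes.S n)) = Check -> good (p (Datatypes.S n)))).
      { rewrite HpS. destruct (cown S A (p n)) eqn:Ho.
        - destruct (Sstep _ IHi Ho) as [M1 [M2 M3]]. split; [auto|split; [discriminate|split; auto]].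
          rewrite M3; discriminate.
        - pose proof (W1 _ _ IHc Ho) as M. split; [auto|split; [auto|]]. apply Dstep with (p n); auto. }
      destruct Hmv as [M1 [M2 [M3 M4]]].
      split; [|split; auto].
      destruct IHc as [C0 C]. split; auto. intros i Hi.
      destruct (Nat.eq_dec i n) as [->|Hne]; [auto| apply C; lia]. }
  destruct (W2 p (fun n => proj1 (Main n)) 0) as [n [_ Hck]].
  destruct (Main n) as [Hc [Hi Hg]].
  specialize (Hg Hck).
  destruct (p n) as [o [u w] cc cm r] eqn:Hpn.
  destruct Hg as [Ho [Hcc [Hcm Htp]]]. destruct Hi as [[k Hk] _]. simpl in *. subst.
  exists w, k. split; [exact Htp|].
  eapply transfer; [split; [exact W1| exact W2] | exact Hc | exact Hpn].
Qed.
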